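(* Let $X=(x_1,\dots,x_t)$ be distinct elements of $[n]$ and let $\mathrm{Shuffle}(\pi,X)$ be the procedure: for $i=t,t-1,\dots,1$, choose $z$ uniformly at random from $[n]\setminus\{x_1,\dots,x_{i-1}\}$ and swap the values $\pi(x_i)$ and $\pi(z)$; output $\pi$. (a) If $\phi:X\to[n]$ is injective and $\pi$ is uniformly random among permutations of $[n]$ with $\pi|_X=\phi$, then $\mathrm{Shuffle}(\pi,X)$ is a uniformly random permutation of $[n]$. (b) Let $E$ be a pattern event with $\mathrm{vbl}(E)=X$ and let $\pi\in E$. If $E'$ is a pattern event with $\pi\notin E'$ and $\mathrm{Shuffle}(\pi,X)\in E'$ with positive probability, then there exist $(x,y)\in P(E)$ and $(x',y')\in P(E')$ with $x=x'$ or $y=y'$.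
   Context: The probability space is the set of permutations of $[n]$ with the uniform measure. A pattern event $E$ is given by a set $P(E)=\{(x_1,y_1),\dots,(x_k,y_k)\}\subseteq[n]\times[n]$ and occurs for $\pi$ iff $\pi(x_j)=y_j$ for all $j$; $\mathrm{vbl}(E)=\{x:\exists y,(x,y)\in P(E)\}$. ''Swap the values $\pi(a)$ and $\pi(b)$'' means replacing $\pi$ by $\pi\circ\tau_{ab}$ with $\tau_{ab}$ the transposition of $a,b$ (no-op if $a=b$). *)

(* Defs.v *)
From HB Require Import structures.
From mathcomp Require Import all_boot all_order all_algebra all_fingroup.
Set Implicit Arguments. Unset Strict Implicit. Unset Printing Implicit Defensive.
Import GRing.Theory Num.Theory.
Local Open Scope ring_scope.

(* Permutations of [n] are {perm 'I_n}.  In mathcomp, (s * t) x = t (s x),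
   so pi o tau_ab  (x |-> pi (tau_ab x)) is  tperm a b * pi. *)
Definition swapv (n : nat) (pi : {perm 'I_n}) (a b : 'I_n) : {perm 'I_n} :=
  tperm a b * pi.

(* Output distribution of the Shuffle procedure, written on the REVERSED
   list r = [:: x_i; x_{i-1}; ...; x_1]: the first step handles x_i, choosing
   z uniformly in [n] \ {x_1,...,x_{i-1}} (the complement of the tail). *)
Fixpoint shuffle_rev (n : nat) (r : seq 'I_n) (pi : {perm 'I_n}) (s : {perm 'I_n})
  : rat :=
  match r with
  | [::] => (s == pi)%:R
  | x :: r' =>
      (#|[set z : 'I_n | z \notin r']|%:R)^-1 *
      \sum_(z : 'I_n | z \notin r') shuffle_rev r' (swapv pi x z) s
  end.

Definition shuffle_dist (n : nat) (X : seq 'I_n) (pi s : {perm 'I_n}) : rat :=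
  shuffle_rev (rev X) pi s.

(* Pattern events: given by P(E) : {set 'I_n * 'I_n}. *)
Definition occurs (n : nat) (P : {set 'I_n * 'I_n}) (pi : {perm 'I_n}) : bool :=
  [forall p in P, pi p.1 == p.2].

Definition vbl (n : nat) (P : {set 'I_n * 'I_n}) : {set 'I_n} :=
  [set x | [exists y, (x, y) \in P]].

(* Main.v *)
Require Import Defs.
From HB Require Import structures.
From mathcomp Require Import all_boot all_order all_algebra all_fingroup.
Import GRing.Theory Num.Theory.
Local Open Scope ring_scope.

Lemma key (n : nat) (x : 'I_n) (r : seq 'I_n) (phi : 'I_n -> 'I_n)
  (f : {perm 'I_n} -> rat) :
  x \notin r -> {in x :: r &, injective phi} ->
  \sum_(pi : {perm 'I_n} | all (fun y => pi y == phi y) (x :: r))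
     \sum_(z : 'I_n | z \notin r) f (tperm x z * pi)%g
  = \sum_(pi : {perm 'I_n} | all (fun y => pi y == phi y) r) f pi.
Proof.
move=> xr inj.
rewrite exchange_big /=.
transitivity (\sum_(z : 'I_n | z \notin r)
   \sum_(pi : {perm 'I_n} | all (fun y => pi y == phi y) r && (pi z == phi x)) f pi).
  apply: eq_bigr => z zr.
  rewrite (reindex_inj (mulgI (tperm x z))) /=.
  apply: eq_big => pi.
    rewrite permM tpermL andbC; congr (_ && _).
    apply: eq_in_all => y yr; rewrite permM tpermD //.
      by apply: contraNneq xr => ->.
    by apply: contraNneq zr => ->.
  by rewrite mulgA tperm2 mul1g.
rewrite (eq_bigr _ (fun z _ => big_mkcondr _ _ _ _ _)) exchange_big /=.
apply: eq_bigr => pi hpi.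
rewrite -big_mkcondr /=.
rewrite (big_pred1 (pi^-1 (phi x))%g) // => z /=.
have -> : (pi z == phi x) = (z == (pi^-1 (phi x))%g).
  by apply/eqP/eqP => [<-|->]; rewrite ?permK ?permKV.
case: eqP => [->|]; rewrite ?andbF ?andbT //.
apply/negP => hr.
have := allP hpi _ hr; rewrite permKV => /eqP /esym h.
have := inj _ _ _ _ h; rewrite !inE eqxx hr orbT => /(_ isT isT) hx.
by move: xr; rewrite -hx hr.
Qed.

Lemma sum_const_pred (T : finType) (P : pred T) (c : rat) :
  \sum_(i | P i) c = c *+ #|[set i | P i]|.
Proof.
rewrite -sumr_const; apply: eq_bigl => i; by rewrite inE.
Qed.

Lemma Slem (n : nat) (r : seq 'I_n) (phi : 'I_n -> 'I_n) (s : {perm 'I_n}) :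
  uniq r -> {in r &, injective phi} ->
  (\sum_(pi : {perm 'I_n} | all (fun y => pi y == phi y) r) shuffle_rev r pi s)
     * (n`!)%:R = #|[set pi : {perm 'I_n} | all (fun y => pi y == phi y) r]|%:R
  /\ #|[set pi : {perm 'I_n} | all (fun y => pi y == phi y) r]| != 0%N.
Proof.
elim: r => [|x r IH] /=.
  move=> _ _.
  have -> : [set pi : {perm 'I_n} | true] = setT by apply/setP => p; rewrite !inE.
  rewrite cardsT card_Sn; split; last by rewrite -lt0n fact_gt0.
  rewrite (bigD1 s) //= eqxx big1 ?addr0 ?mul1r // => p /negPf.
  by rewrite eq_sym => ->.
case/andP=> xr ur inj.
have inj' : {in r &, injective phi}.
  by move=> a b ha hb; apply: inj; rewrite inE ?ha ?hb orbT.
have [IH1 IH2] := IH ur inj'.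
set m := #|[set z : 'I_n | z \notin r]|.
have m0 : m != 0%N by rewrite /m -lt0n card_gt0; apply/set0Pn; exists x; rewrite inE.
have cardeq : (#|[set pi : {perm 'I_n} | (pi x == phi x) && all (fun y => pi y == phi y) r]| * m
              = #|[set pi : {perm 'I_n} | all (fun y => pi y == phi y) r]|)%N.
  have := @key n x r phi (fun _ => 1) xr inj.
  rewrite /= (eq_bigr (fun _ => 1 *+ m)); last by move=> p _; rewrite sum_const_pred.
  rewrite !sum_const_pred -mulrnA => /eqP; rewrite eqr_nat => /eqP.
  by rewrite mulnC.
split; last first.
  by apply: contraNneq IH2; rewrite -cardeq => ->.
rewrite -big_distrr /= -mulrA.
under eq_bigr do rewrite /swapv.
rewrite (@key n x r phi (fun p => shuffle_rev r p s) xr inj) IH1 -cardeq natrM.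
by rewrite mulrCA mulVf ?mulr1 // pnatr_eq0.
Qed.

Lemma invlem (n : nat) (r : seq 'I_n) (pi s : {perm 'I_n}) :
  uniq r -> shuffle_rev r pi s != 0 -> forall w, w \notin r ->
  (s w == pi w) || [exists u, (u \in r) && (s w == pi u)].
Proof.
elim: r pi => [|x r IH] pi /=.
  move=> _; have [->|_] := eqVneq s pi.
  by move=> _ w _; rewrite eqxx.
  by rewrite mulr0n eqxx.
case/andP=> xr ur; rewrite mulf_eq0 negb_or => /andP[_ hs] w.
rewrite inE negb_or => /andP[wx wr].
have [z zr hz] : exists2 z, z \notin r & shuffle_rev r (swapv pi x z) s != 0.
  apply/exists_inP; apply: contraNT hs; rewrite negb_exists_in => /forall_inP H.
  by apply/eqP; apply: big1 => z zr; apply/eqP; move: (H z zr); rewrite negbK.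
case/orP: (IH _ ur hz w wr) => [/eqP ->|/existsP [u /andP[ur' /eqP ->]]].
  rewrite /swapv permM.
  case: (eqVneq w z) => [->|wz].
    rewrite tpermR; apply/orP; right.
    by apply/existsP; exists x; rewrite inE !eqxx.
  by rewrite tpermD 1?eq_sym // eqxx.
rewrite /swapv permM tpermD; last by apply: contraNneq zr => ->.
  by apply/orP; right; apply/existsP; exists u; rewrite inE ur' orbT eqxx.
by apply: contraNneq xr => ->.
Qed.

Theorem mainTheorem13 (n : nat) (X : seq 'I_n) (hX : uniq X) :
  (* (a) *)
  (forall phi : 'I_n -> 'I_n, {in X &, injective phi} ->
     forall s : {perm 'I_n},
       (#|[set pi : {perm 'I_n} | all (fun x => pi x == phi x) X]|%:R)^-1 *
       (\sum_(pi : {perm 'I_n} | all (fun x => pi x == phi x) X)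
           shuffle_dist X pi s)
       = ((n`!)%:R)^-1 :> rat)
  /\
  (* (b) *)
  (forall (E E' : {set 'I_n * 'I_n}) (pi : {perm 'I_n}),
     vbl E = [set x in X] ->
     occurs E pi ->
     ~~ occurs E' pi ->
     (exists s : {perm 'I_n}, occurs E' s /\ 0 < shuffle_dist X pi s) ->
     exists p, exists p', [/\ p \in E, p' \in E' & (p.1 == p'.1) || (p.2 == p'.2)]).
Proof.
split.
  move=> phi inj s.
  have inj' : {in rev X &, injective phi}.
    by move=> a b; rewrite !mem_rev; apply: inj.
  have [H1 H2] := @Slem n (rev X) phi s ltac:(by rewrite rev_uniq) inj'.
  have E1 : [set pi : {perm 'I_n} | all (fun y => pi y == phi y) (rev X)]
          = [set pi : {perm 'I_n} | all (fun y => pi y == phi y) X].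
    by apply/setP => p; rewrite !inE all_rev.
  rewrite E1 in H1 H2.
  rewrite (eq_bigl (fun pi : {perm 'I_n} => all (fun y => pi y == phi y) X)) in H1;
    last by move=> p; rewrite all_rev.
  rewrite /shuffle_dist.
  set S := \sum_(_ | _) _ in H1 *.
  have -> : S = #|[set pi : {perm 'I_n} | all (fun y => pi y == phi y) X]|%:R / (n`!)%:R.
    by rewrite -H1 mulfK // pnatr_eq0 -lt0n fact_gt0.
  by rewrite mulrA mulVf ?mul1r // pnatr_eq0.
move=> E E' pi hv occ nocc [s [occs pos]].
move/forall_inPn: nocc => [p' hp' hne].
have hsp : s p'.1 == p'.2 by move/forall_inP: occs => /(_ _ hp').
have invb : forall u, u \in X -> exists y, (u, y) \in E.
  move=> u uX; have : u \in vbl E by rewrite hv inE.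
  by rewrite inE => /existsP [y hy]; exists y.
case: (boolP (p'.1 \in X)) => hx.
  have [y hy] := invb _ hx.
  by exists (p'.1, y), p'; rewrite hy hp' eqxx.
have := @invlem n (rev X) pi s ltac:(by rewrite rev_uniq) (lt0r_neq0 pos) p'.1
  ltac:(by rewrite mem_rev).
case/orP => [/eqP hsw|/existsP [u /andP [uX /eqP hu]]].
  by move: hne; rewrite -hsw hsp.
rewrite mem_rev in uX.
have [y hy] := invb _ uX.
have /eqP /= hpy := forall_inP occ _ hy.
exists (u, y), p'; split => //=.
by rewrite -hpy -hu (eqP hsp) eqxx orbT.
Qed.
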